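(* Let $\sigma>0$, $k>0$, $\alpha\geq 0$, $\lambda\in\mathbb{R}$, and consider the linear parabolic partial differential equation for $u=u(t,x)$, $x>0$, $$u_t=\tfrac12\sigma^2x^2u_{xx}+kx(\alpha-x)u_x+\lambda x^2u .$$ Suppose $\alpha=0$ and $\lambda=\frac{k^2}{2\sigma^2}$. Then the Lie algebra of infinitesimal (point) symmetries of this equation is spanned by the six vector fields $$V_1=\partial_t,$$ $$V_2=t\partial_t+\tfrac12 x\ln x\,\partial_x+\Big(\tfrac{k}{2\sigma^2}x\ln x+\tfrac14\ln x-\tfrac{\sigma^2}{8}t\Big)u\,\partial_u,$$ $$V_3=t^2\partial_t+tx\ln x\,\partial_x+\Big(\tfrac{k}{\sigma^2}tx\ln x-\tfrac{1}{2\sigma^2}\ln^2x+\tfrac12 t\ln x-\tfrac{\sigma^2}{8}t^2-\tfrac12 t\Big)u\,\partial_u,$$ $$V_4=x\partial_x+\tfrac{k}{\sigma^2}xu\,\partial_u,\qquad V_5=tx\partial_x+\Big(\tfrac{k}{\sigma^2}tx-\tfrac{1}{\sigma^2}\ln x+\tfrac12 t\Big)u\,\partial_u,\qquad V_6=u\partial_u,$$ together with the infinite-dimensional subalgebra of vector fields $V_\varphi=\varphi(t,x)\partial_u$, where $\varphi(t,x)$ is an arbitrary solution of the equation.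
   Context: An infinitesimal symmetry is a vector field $V=\tau(t,x,u)\partial_t+\xi(t,x,u)\partial_x+\phi(t,x,u)\partial_u$ generating a one-parameter group of transformations of $(t,x,u)$ that maps solutions of the equation to solutions; equivalently, the second prolongation of $V$ applied to $\tfrac12\sigma^2x^2u_{xx}+kx(\alpha-x)u_x+\lambda x^2u-u_t$ vanishes on solutions of the equation. *)

(* Defs.v *)
From Stdlib Require Import Reals List.
From Coquelicot Require Import Coquelicot.
Open Scope R_scope.

(** Functions of (t, x, u) are curried: f : R -> R -> R -> R.
    The domain is Omega = { (t,x,u) | t in R, x > 0, u in R }. *)

Inductive dir := Dt | Dx | Du.

Definition pd (d : dir) (f : R -> R -> R -> R) : R -> R -> R -> R :=
  match d with
  | Dt => fun t x u => Derive (fun s => f s x u) t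
  | Dx => fun t x u => Derive (fun s => f t s u) x
  | Du => fun t x u => Derive (fun s => f t x s) u
  end.

Definition ex_pd (d : dir) (f : R -> R -> R -> R) (t x u : R) : Prop :=
  match d with
  | Dt => ex_derive (fun s => f s x u) t
  | Dx => ex_derive (fun s => f t s u) x
  | Du => ex_derive (fun s => f t x s) u
  end.

Fixpoint pds (l : list dir) (f : R -> R -> R -> R) : R -> R -> R -> R :=
  match l with
  | nil => f
  | d :: l' => pd d (pds l' f)
  end.

Definition smooth_on (f : R -> R -> R -> R) : Prop :=
  forall (l : list dir) (t x u : R), 0 < x ->
    continuous (fun p : R * R * R => pds l f (fst (fst p)) (snd (fst p)) (snd p))
               ((t, x), u)
    /\ (forall d : dir, ex_pd d (pds l f) t x u).

Definition p_t f := pd Dt f.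
Definition p_x f := pd Dx f.
Definition p_u f := pd Du f.

Definition Dx1 (f : R -> R -> R -> R) (t x u ux : R) : R :=
  p_x f t x u + ux * p_u f t x u.
Definition Dx2 (f : R -> R -> R -> R) (t x u ux uxx : R) : R :=
  p_x (p_x f) t x u + 2 * ux * p_x (p_u f) t x u
  + ux ^ 2 * p_u (p_u f) t x u + uxx * p_u f t x u.
Definition Dt1 (f : R -> R -> R -> R) (t x u ut : R) : R :=
  p_t f t x u + ut * p_u f t x u.

Definition Delta (sigma k alpha lambda : R) (x u ut ux uxx : R) : R :=
  / 2 * sigma ^ 2 * x ^ 2 * uxx + k * x * (alpha - x) * ux
  + lambda * x ^ 2 * u - ut.

(** Coefficients of the second prolongation of
    V = tau d_t + xi d_x + phi d_u  (Olver's formula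
    phi^J = D_J (phi - xi u_x - tau u_t) + xi u_{J,x} + tau u_{J,t}). *)
Definition phi_t (tau xi phi : R -> R -> R -> R) (t x u ut ux : R) : R :=
  Dt1 phi t x u ut - ux * Dt1 xi t x u ut - ut * Dt1 tau t x u ut.
Definition phi_x (tau xi phi : R -> R -> R -> R) (t x u ut ux : R) : R :=
  Dx1 phi t x u ux - ux * Dx1 xi t x u ux - ut * Dx1 tau t x u ux.
Definition phi_xx (tau xi phi : R -> R -> R -> R)
    (t x u ut ux uxx uxt : R) : R :=
  Dx2 phi t x u ux uxx - ux * Dx2 xi t x u ux uxx - ut * Dx2 tau t x u ux uxx
  - 2 * uxx * Dx1 xi t x u ux - 2 * uxt * Dx1 tau t x u ux.

(** pr^(2) V applied to Delta (Delta does not depend on t, u_tt, u_xt). *)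
Definition pr2V_Delta (sigma k alpha lambda : R) (tau xi phi : R -> R -> R -> R)
    (t x u ut ux uxx uxt : R) : R :=
  xi t x u * (sigma ^ 2 * x * uxx + k * (alpha - 2 * x) * ux + 2 * lambda * x * u)
  + phi t x u * (lambda * x ^ 2)
  + phi_x tau xi phi t x u ut ux * (k * x * (alpha - x))
  + phi_xx tau xi phi t x u ut ux uxx uxt * (/ 2 * sigma ^ 2 * x ^ 2)
  - phi_t tau xi phi t x u ut ux.

Definition is_symmetry (sigma k alpha lambda : R) (tau xi phi : R -> R -> R -> R) : Prop :=
  forall t x u ut ux uxx uxt : R, 0 < x ->
    Delta sigma k alpha lambda x u ut ux uxx = 0 ->
    pr2V_Delta sigma k alpha lambda tau xi phi t x u ut ux uxx uxt = 0.

Definition is_solution (sigma k alpha lambda : R) (psi : R -> R -> R) : Prop :=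
  smooth_on (fun t x _ => psi t x) /\
  forall t x : R, 0 < x ->
    Derive (fun s => psi s x) t =
      / 2 * sigma ^ 2 * x ^ 2 * Derive (fun s => Derive (fun r => psi t r) s) x
      + k * x * (alpha - x) * Derive (fun s => psi t s) x
      + lambda * x ^ 2 * psi t x.

Definition tauV (i : nat) (t x u : R) : R :=
  match i with
  | 1%nat => 1
  | 2%nat => t
  | 3%nat => t ^ 2
  | _ => 0
  end.

Definition xiV (i : nat) (t x u : R) : R :=
  match i with
  | 2%nat => / 2 * x * ln x
  | 3%nat => t * x * ln x
  | 4%nat => x
  | 5%nat => t * x
  | _ => 0
  end.

Definition phiV (sigma k : R) (i : nat) (t x u : R) : R :=
  match i with
  | 2%nat => (k / (2 * sigma ^ 2) * x * ln x + / 4 * ln x - sigma ^ 2 / 8 * t) * u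
  | 3%nat => (k / sigma ^ 2 * t * x * ln x - / (2 * sigma ^ 2) * (ln x) ^ 2
              + / 2 * t * ln x - sigma ^ 2 / 8 * t ^ 2 - / 2 * t) * u
  | 4%nat => k / sigma ^ 2 * x * u
  | 5%nat => (k / sigma ^ 2 * t * x - / sigma ^ 2 * ln x + / 2 * t) * u
  | 6%nat => u
  | _ => 0
  end.

(* Main.v *)
From Pilot Require Import Defs.
From Stdlib Require Import Reals List.
From Coquelicot Require Import Coquelicot.
Open Scope R_scope.
From Stdlib Require Import Lra.
Notation DX := Pilot.Defs.Dx.
Ltac pos := repeat (apply Rmult_lt_0_compat || apply pow_lt || apply Rinv_0_lt_compat); try lra.
Ltac nz := match goal with |- _ <> 0 => apply Rgt_not_eq; unfold Rgt; pos end.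

Lemma locally_pos (x : R) (P : R -> Prop) : 0 < x ->
  (forall y, 0 < y -> P y) -> locally x P.
Proof.
  intros Hx HP. exists (mkposreal x Hx). intros y Hy.
  apply HP. change (Rabs (y - x) < x) in Hy.
  apply Rabs_def2 in Hy. lra.
Qed.

Lemma ext_pd (f g : R -> R -> R -> R) :
  (forall t x u, 0 < x -> f t x u = g t x u) ->
  forall d t x u, 0 < x -> pd d f t x u = pd d g t x u.
Proof.
  intros H d t x u Hx. destruct d; simpl.
  - apply Derive_ext. intros s. now apply H.
  - apply Derive_ext_loc. apply locally_pos; auto.
  - apply Derive_ext. intros s. now apply H.
Qed.

Lemma const_on (f : R -> R) (a : R) :
  (forall s, a < s -> is_derive f s 0) -> forall y z, a < y -> a < z -> f y = f z.
Proof.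
  intros H y z Hy Hz.
  destruct (Rtotal_order y z) as [Hlt|[Heq|Hgt]].
  - apply eq_is_derive; auto. intros s Hs. apply H. lra.
  - now subst.
  - symmetry. apply eq_is_derive; auto. intros s Hs. apply H. lra.
Qed.

Lemma pd_zero d t x u : pd d (fun _ _ _ => 0) t x u = 0.
Proof. destruct d; simpl; apply Derive_const. Qed.


Definition Pf (s k a l x u ut ux uxx uxt : R)
  (Tt Tx Tu Txx Txu Tuu X Xt Xx Xu Xxx Xxu Xuu F Ft Fx Fu Fxx Fxu Fuu : R) : R :=
  X * (s ^ 2 * x * uxx + k * (a - 2 * x) * ux + 2 * l * x * u)
  + F * (l * x ^ 2)
  + ((Fx + ux * Fu) - ux * (Xx + ux * Xu) - ut * (Tx + ux * Tu)) * (k * x * (a - x))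
  + ((Fxx + 2 * ux * Fxu + ux ^ 2 * Fuu + uxx * Fu)
     - ux * (Xxx + 2 * ux * Xxu + ux ^ 2 * Xuu + uxx * Xu)
     - ut * (Txx + 2 * ux * Txu + ux ^ 2 * Tuu + uxx * Tu)
     - 2 * uxx * (Xx + ux * Xu) - 2 * uxt * (Tx + ux * Tu)) * (/ 2 * s ^ 2 * x ^ 2)
  - ((Ft + ut * Fu) - ux * (Xt + ut * Xu) - ut * (Tt + ut * Tu)).

Lemma pr2_eq s k a l tau xi phi t x u ut ux uxx uxt :
  pr2V_Delta s k a l tau xi phi t x u ut ux uxx uxt =
  Pf s k a l x u ut ux uxx uxt
   (p_t tau t x u) (p_x tau t x u) (p_u tau t x u) (p_x (p_x tau) t x u)
   (p_x (p_u tau) t x u) (p_u (p_u tau) t x u)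
   (xi t x u) (p_t xi t x u) (p_x xi t x u) (p_u xi t x u) (p_x (p_x xi) t x u)
   (p_x (p_u xi) t x u) (p_u (p_u xi) t x u)
   (phi t x u) (p_t phi t x u) (p_x phi t x u) (p_u phi t x u) (p_x (p_x phi) t x u)
   (p_x (p_u phi) t x u) (p_u (p_u phi) t x u).
Proof. reflexivity. Qed.

Definition UT s k l x u ux uxx := / 2 * s ^ 2 * x ^ 2 * uxx + k * x * (0 - x) * ux + l * x ^ 2 * u.

Section Alg.
Variables (s k x u : R) (Hs : 0 < s) (Hx : 0 < x).
Let l := k ^ 2 / (2 * s ^ 2).
Variables (Tt Tx Tu Txx Txu Tuu X Xt Xx Xu Xxx Xxu Xuu F Ft Fx Fu Fxx Fxu Fuu : R).
Let P ux uxx uxt := Pf s k 0 l x u (UT s k l x u ux uxx) ux uxx uxt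
  Tt Tx Tu Txx Txu Tuu X Xt Xx Xu Xxx Xxu Xuu F Ft Fx Fu Fxx Fxu Fuu.
Hypothesis HP : forall ux uxx uxt, P ux uxx uxt = 0.

Let A := / 2 * s ^ 2 * x ^ 2.
Lemma A_ne : A <> 0.
Proof. unfold A. assert (0 < s^2 * x^2) by (apply Rmult_lt_0_compat; apply pow_lt; lra). nra. Qed.

Lemma alg1 : Tx = 0 /\ Tu = 0.
Proof.
  assert (E1 : P 0 0 1 - P 0 0 0 = -2 * A * Tx) by (unfold P, Pf, A; ring).
  assert (E2 : P 1 0 1 - P 1 0 0 = -2 * A * (Tx + Tu)) by (unfold P, Pf, A; ring).
  repeat rewrite HP in E1; repeat rewrite HP in E2. pose proof A_ne.
  assert (Tx = 0) by (apply (Rmult_eq_reg_l (-2 * A)); [lra| lra]).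
  split; auto. apply (Rmult_eq_reg_l (-2 * A)); [lra| lra].
Qed.

Lemma alg2 : Tx = 0 -> Tu = 0 -> Txx = 0 -> Txu = 0 -> Tuu = 0 -> Xu = 0.
Proof.
  intros h1 h2 h3 h4 h5.
  assert (E : P 1 1 0 - P 1 0 0 - P 0 1 0 + P 0 0 0 = -2 * A * Xu)
    by (unfold P, Pf, A; rewrite h1, h2, h3, h4, h5; unfold UT; ring).
  repeat rewrite HP in E. pose proof A_ne.
  apply (Rmult_eq_reg_l (-2 * A)); [lra| lra].
Qed.

Lemma alg3 : Tx = 0 -> Tu = 0 -> Txx = 0 -> Txu = 0 -> Tuu = 0 ->
  Xu = 0 -> Xxu = 0 -> Xuu = 0 ->
  A * Tt + s^2 * x * X - 2 * A * Xx = 0 /\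
  Fuu = 0 /\
  -2*k*x*X + k*x^2*Xx + 2*A*Fxu - A*Xxx + Xt - k*x^2*Tt = 0 /\
  2*l*x*u*X + l*x^2*F - k*x^2*Fx + A*Fxx - Ft - l*x^2*u*Fu + l*x^2*u*Tt = 0.
Proof.
  intros h1 h2 h3 h4 h5 h6 h7 h8. pose proof A_ne.
  assert (E1 : P 0 1 0 - P 0 0 0 = A * Tt + s^2 * x * X - 2 * A * Xx)
    by (unfold P, Pf, A; rewrite h1, h2, h3, h4, h5, h6, h7, h8; unfold UT; ring).
  assert (E2 : P 1 0 0 + P (-1) 0 0 - 2 * P 0 0 0 = 2 * A * Fuu)
    by (unfold P, Pf, A; rewrite h1, h2, h3, h4, h5, h6, h7, h8; unfold UT; ring).
  assert (E3 : P 1 0 0 - P (-1) 0 0 = 2 * (-2*k*x*X + k*x^2*Xx + 2*A*Fxu - A*Xxx + Xt - k*x^2*Tt))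
    by (unfold P, Pf, A; rewrite h1, h2, h3, h4, h5, h6, h7, h8; unfold UT; ring).
  assert (E4 : P 0 0 0 = 2*l*x*u*X + l*x^2*F - k*x^2*Fx + A*Fxx - Ft - l*x^2*u*Fu + l*x^2*u*Tt)
    by (unfold P, Pf, A; rewrite h1, h2, h3, h4, h5, h6, h7, h8; unfold UT; ring).
  repeat rewrite HP in E1; repeat rewrite HP in E2; repeat rewrite HP in E3; repeat rewrite HP in E4.
    split; [rewrite <- E1; ring|]. split; [apply (Rmult_eq_reg_l (2 * A)); [rewrite <- E2; ring| lra]|]. split; [apply (Rmult_eq_reg_l 2); [rewrite <- E3; ring| lra]| rewrite <- E4; ring].
Qed.
End Alg.

Lemma alg_conv s k x u (Tt Tx Tu Txx Txu Tuu X Xt Xx Xu Xxx Xxu Xuu F Ft Fx Fu Fxx Fxu Fuu : R) :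
  let l := k ^ 2 / (2 * s ^ 2) in
  let A := / 2 * s ^ 2 * x ^ 2 in
  Tx = 0 -> Tu = 0 -> Txx = 0 -> Txu = 0 -> Tuu = 0 ->
  Xu = 0 -> Xxu = 0 -> Xuu = 0 -> Fuu = 0 ->
  A * Tt + s^2 * x * X - 2 * A * Xx = 0 ->
  -2*k*x*X + k*x^2*Xx + 2*A*Fxu - A*Xxx + Xt - k*x^2*Tt = 0 ->
  2*l*x*u*X + l*x^2*F - k*x^2*Fx + A*Fxx - Ft - l*x^2*u*Fu + l*x^2*u*Tt = 0 ->
  forall ux uxx uxt, Pf s k 0 l x u (UT s k l x u ux uxx) ux uxx uxt
  Tt Tx Tu Txx Txu Tuu X Xt Xx Xu Xxx Xxu Xuu F Ft Fx Fu Fxx Fxu Fuu = 0.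
Proof.
  intros l A h1 h2 h3 h4 h5 h6 h7 h8 h9 d1 d3 d4 ux uxx uxt.
  subst Tx Tu Txx Txu Tuu Xu Xxu Xuu Fuu.
  transitivity (uxx * (A * Tt + s^2 * x * X - 2 * A * Xx)
    + ux * (-2*k*x*X + k*x^2*Xx + 2*A*Fxu - A*Xxx + Xt - k*x^2*Tt)
    + (2*l*x*u*X + l*x^2*F - k*x^2*Fx + A*Fxx - Ft - l*x^2*u*Fu + l*x^2*u*Tt)).
  - unfold Pf, UT, A, l; ring.
  - rewrite d1, d3, d4; ring.
Qed.


Lemma ext_px (f g : R -> R -> R -> R) :
  (forall t x u, 0 < x -> f t x u = g t x u) ->
  forall t x u, 0 < x -> p_x f t x u = p_x g t x u.
Proof. intros H t x u Hx. exact (ext_pd f g H DX t x u Hx). Qed.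
Lemma ext_pt (f g : R -> R -> R -> R) :
  (forall t x u, 0 < x -> f t x u = g t x u) ->
  forall t x u, 0 < x -> p_t f t x u = p_t g t x u.
Proof. intros H t x u Hx. exact (ext_pd f g H Dt t x u Hx). Qed.
Lemma ext_pu (f g : R -> R -> R -> R) :
  (forall t x u, 0 < x -> f t x u = g t x u) ->
  forall t x u, 0 < x -> p_u f t x u = p_u g t x u.
Proof. intros H t x u Hx. exact (ext_pd f g H Du t x u Hx). Qed.


Lemma isd0 f s : ex_derive f s -> Derive f s = 0 -> is_derive f s 0.
Proof. intros H1 H2. rewrite <- H2. now apply Derive_correct. Qed.

Lemma const_u (f : R->R->R->R) t x u : (forall s, ex_pd Du f t x s) ->
  (forall s, p_u f t x s = 0) -> f t x u = f t x 0.
Proof.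
  intros H1 H2. apply (const_on (fun s => f t x s) (Rmin u 0 - 1)).
  - intros r _. apply isd0; [apply H1| apply H2].
  - pose proof (Rmin_l u 0); lra.
  - pose proof (Rmin_r u 0); lra.
Qed.

Lemma const_x (f : R->R->R->R) t x u : (forall s, 0 < s -> ex_pd DX f t s u) ->
  (forall s, 0 < s -> p_x f t s u = 0) -> 0 < x -> f t x u = f t 1 u.
Proof.
  intros H1 H2 Hx. apply (const_on (fun s => f t s u) 0); try lra.
  intros r Hr. apply isd0; [apply H1| apply H2]; auto.
Qed.

Lemma smooth_ex f (Hf : smooth_on f) ll d t x u : 0 < x -> ex_pd d (pds ll f) t x u.
Proof. intros Hx. apply (proj2 (Hf ll t x u Hx)). Qed.

Lemma pd_zero_on (f : R->R->R->R) : (forall t x u, 0 < x -> f t x u = 0) ->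
  forall d t x u, 0 < x -> pd d f t x u = 0.
Proof.
  intros H d t x u Hx. rewrite (ext_pd f (fun _ _ _ => 0) H d t x u Hx). apply pd_zero.
Qed.

Definition tau1 (T : R->R->R->R) t := p_t T t 1 0.
Definition tau2 (T : R->R->R->R) t := p_t (p_t T) t 1 0.
Definition tau3 (T : R->R->R->R) t := p_t (p_t (p_t T)) t 1 0.
Definition del (X : R->R->R->R) t := X t 1 0.
Definition del1 (X : R->R->R->R) t := p_t X t 1 0.
Definition del2 (X : R->R->R->R) t := p_t (p_t X) t 1 0.

Lemma mult_solve a b : a <> 0 -> a * b = 0 -> b = 0.
Proof. intros H1 H2. destruct (Rmult_integral _ _ H2); auto. contradiction. Qed.

Definition B0 s k T X t x := (k/s^2)*(/2*tau1 T t*x*ln x + del X t*x) + tau1 T t*ln x/4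
  - tau2 T t*(ln x)^2/(4*s^2) - del1 X t*ln x/s^2.
Definition B0x s k T X t x := (k/s^2)*(/2*tau1 T t*(ln x+1) + del X t) + tau1 T t/(4*x)
  - tau2 T t*ln x/(2*s^2*x) - del1 X t/(s^2*x).
Definition B0xx s k T X t x := (k/s^2)*(tau1 T t/(2*x)) - tau1 T t/(4*x^2)
  - tau2 T t*(1 - ln x)/(2*s^2*x^2) + del1 X t/(s^2*x^2).
Definition gam s k (X F : R->R->R->R) t := p_u F t 1 0 - k/s^2 * del X t.

Definition B0t s k T X t x := (k/s^2)*(/2*tau2 T t*x*ln x + del1 X t*x) + tau2 T t*ln x/4
  - tau3 T t*(ln x)^2/(4*s^2) - del2 X t*ln x/s^2.

Lemma comb (a b g c : R) : a = 0 -> b = 0 -> c <> 0 -> g * c = a - b -> g = 0.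
Proof. intros -> -> Hc H. apply (mult_solve c); auto. rewrite Rmult_comm, H. ring. Qed.

Lemma comb_p (a b g c : R) : a = 0 -> b = 0 -> c <> 0 -> g * c = a + b -> g = 0.
Proof. intros -> -> Hc H. apply (mult_solve c); auto. rewrite Rmult_comm, H. ring. Qed.

Lemma pds_slice (F : R -> R -> R -> R) ll :
  (forall t x u, pds ll (fun t x _ => F t x 0) t x u = pds ll F t x 0) \/
  (forall t x u, pds ll (fun t x _ => F t x 0) t x u = 0).
Proof.
  induction ll as [|d ll IH].
  - left. reflexivity.
  - destruct IH as [H|H]; destruct d.
    + left. intros t x u. simpl. apply Derive_ext. intros r. apply H.
    + left. intros t x u. simpl. apply Derive_ext. intros r. apply H.
    + right. intros t x u. simpl. rewrite (Derive_ext _ (fun _ => pds ll F t x 0)).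
      * apply Derive_const.
      * intros r. apply H.
    + right. intros t x u. simpl. rewrite (Derive_ext _ (fun _ => 0)); [apply Derive_const| intros; apply H].
    + right. intros t x u. simpl. rewrite (Derive_ext _ (fun _ => 0)); [apply Derive_const| intros; apply H].
    + right. intros t x u. simpl. rewrite (Derive_ext _ (fun _ => 0)); [apply Derive_const| intros; apply H].
Qed.

Lemma smooth_slice (F : R -> R -> R -> R) : smooth_on F -> smooth_on (fun t x _ => F t x 0).
Proof.
  intros HF ll t x u Hx. destruct (pds_slice F ll) as [H|H]; split.
  - apply (continuous_ext (fun p : R * R * R => pds ll F (fst (fst p)) (snd (fst p)) 0)).
    { intros p. symmetry. apply H. }
    apply (continuous_comp_2 fst (fun _ => 0) (fun a b => pds ll F (fst a) (snd a) b)).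
    + apply continuous_fst.
    + apply continuous_const.
    + exact (proj1 (HF ll t x 0 Hx)).
  - intros d. destruct d; simpl.
    + apply (ex_derive_ext (fun r => pds ll F r x 0)); [intros; symmetry; apply H|].
      exact (smooth_ex F HF ll Dt t x 0 Hx).
    + apply (ex_derive_ext (fun r => pds ll F t r 0)); [intros; symmetry; apply H|].
      exact (smooth_ex F HF ll DX t x 0 Hx).
    + apply (ex_derive_ext (fun r => pds ll F t x 0)); [intros; symmetry; apply H|].
      apply ex_derive_const.
  - apply (continuous_ext (fun _ => 0)); [intros p; symmetry; apply H|]. apply continuous_const.
  - intros d. destruct d; simpl;
    (apply (ex_derive_ext (fun r => 0)); [intros; symmetry; apply H| apply ex_derive_const]).
Qed.

Lemma ode (f g : R -> R) : (forall r, ex_derive f r) -> (forall r, is_derive g r (Derive f r)) ->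
  forall t, f t = f 0 + g t - g 0.
Proof.
  intros Hf Hg t.
  assert (E : f t - g t = f 0 - g 0).
  { apply (const_on (fun r => f r - g r) (Rmin t 0 - 1)).
    - intros r _. assert (H := is_derive_minus f g r _ _ (Derive_correct f r (Hf r)) (Hg r)).
      rewrite minus_eq_zero in H. exact H.
    - pose proof (Rmin_l t 0); lra.
    - pose proof (Rmin_r t 0); lra. }
  lra.
Qed.

Section Fwd.
Variables (s k : R) (Hs : 0 < s).
Let l := k ^ 2 / (2 * s ^ 2).
Variables (T X F : R -> R -> R -> R).
Hypotheses (HT : smooth_on T) (HX : smooth_on X) (HF : smooth_on F).
Hypothesis HP0 : forall t x u, 0 < x -> forall ux uxx uxt,
  Pf s k 0 l x u (UT s k l x u ux uxx) ux uxx uxt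
   (p_t T t x u) (p_x T t x u) (p_u T t x u) (p_x (p_x T) t x u)
   (p_x (p_u T) t x u) (p_u (p_u T) t x u)
   (X t x u) (p_t X t x u) (p_x X t x u) (p_u X t x u) (p_x (p_x X) t x u)
   (p_x (p_u X) t x u) (p_u (p_u X) t x u)
   (F t x u) (p_t F t x u) (p_x F t x u) (p_u F t x u) (p_x (p_x F) t x u)
   (p_x (p_u F) t x u) (p_u (p_u F) t x u) = 0.

Lemma S1 t x u : 0 < x -> p_x T t x u = 0 /\ p_u T t x u = 0.
Proof. intros Hx. exact (alg1 s k x u Hs Hx _ _ _ _ _ _ _ _ _ _ _ _ _ _ _ _ _ _ _ _ (HP0 t x u Hx)). Qed.

Lemma S1b t x u : 0 < x ->
  p_x (p_x T) t x u = 0 /\ p_x (p_u T) t x u = 0 /\ p_u (p_u T) t x u = 0.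
Proof.
  intros Hx. split; [|split]; apply pd_zero_on; auto; intros; apply S1; auto.
Qed.

Lemma S2 t x u : 0 < x -> p_u X t x u = 0.
Proof.
  intros Hx. destruct (S1 t x u Hx) as [h1 h2]. destruct (S1b t x u Hx) as [h3 [h4 h5]].
  exact (alg2 s k x u Hs Hx _ _ _ _ _ _ _ _ _ _ _ _ _ _ _ _ _ _ _ _ (HP0 t x u Hx) h1 h2 h3 h4 h5).
Qed.

Lemma S3 t x u : 0 < x ->
  let A := / 2 * s ^ 2 * x ^ 2 in
  A * p_t T t x u + s^2 * x * X t x u - 2 * A * p_x X t x u = 0 /\
  p_u (p_u F) t x u = 0 /\
  -2*k*x*X t x u + k*x^2*p_x X t x u + 2*A*p_x (p_u F) t x u - A*p_x (p_x X) t x u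
    + p_t X t x u - k*x^2*p_t T t x u = 0 /\
  2*l*x*u*X t x u + l*x^2*F t x u - k*x^2*p_x F t x u + A*p_x (p_x F) t x u
   - p_t F t x u - l*x^2*u*p_u F t x u + l*x^2*u*p_t T t x u = 0.
Proof.
  intros Hx A. destruct (S1 t x u Hx) as [h1 h2]. destruct (S1b t x u Hx) as [h3 [h4 h5]].
  assert (h6 := S2 t x u Hx).
  assert (h7 : p_x (p_u X) t x u = 0) by (apply pd_zero_on; auto; intros; apply S2; auto).
  assert (h8 : p_u (p_u X) t x u = 0) by (apply pd_zero_on; auto; intros; apply S2; auto).
  exact (alg3 s k x u Hs Hx _ _ _ _ _ _ _ _ _ _ _ _ _ _ _ _ _ _ _ _ (HP0 t x u Hx) h1 h2 h3 h4 h5 h6 h7 h8).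
Qed.


Lemma S4 t x u : 0 < x -> T t x u = T t 1 0.
Proof.
  intros Hx. rewrite (const_u T t x u).
  - apply const_x; auto.
    + intros r Hr. apply (smooth_ex T HT nil DX t r 0 Hr).
    + intros r Hr. apply S1; auto.
  - intros r. apply (smooth_ex T HT nil Du t x r Hx).
  - intros r. apply S1; auto.
Qed.

Lemma S5 t x u : 0 < x -> p_t T t x u = p_t T t 1 0.
Proof. intros Hx. unfold p_t, pd. apply Derive_ext. intros r. apply S4; auto. Qed.

Lemma S5b t x u : 0 < x -> p_t (p_t T) t x u = p_t (p_t T) t 1 0.
Proof. intros Hx. change (Derive (fun r => p_t T r x u) t = Derive (fun r => p_t T r 1 0) t). apply Derive_ext. intros r. apply S5; auto. Qed.


Lemma Xx_eq t r : 0 < r -> p_x X t r 0 = /2 * tau1 T t + X t r 0 / r.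
Proof.
  intros Hr. destruct (S3 t r 0 Hr) as [d1 _]. rewrite (S5 t r 0 Hr) in d1.
  unfold tau1. apply Rminus_diag_uniq.
  apply (mult_solve (- s^2 * r^2)).
  { assert (0 < s^2 * r^2) by (apply Rmult_lt_0_compat; apply pow_lt; lra). lra. }
  etransitivity; [|exact d1]. field. lra.
Qed.

Lemma S6 t x u : 0 < x -> X t x u = x * (/2 * tau1 T t * ln x + del X t).
Proof.
  intros Hx. rewrite (const_u X t x u).
  2: { intros r. apply (smooth_ex X HX nil Du t x r Hx). }
  2: { intros r. apply S2; auto. }
  assert (E : X t x 0 / x - /2 * tau1 T t * ln x = X t 1 0 / 1 - /2 * tau1 T t * ln 1).
  { apply (const_on (fun r => X t r 0 / r - /2 * tau1 T t * ln r) 0); try lra.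
    intros r Hr. auto_derive.
    - repeat split; try lra. apply (smooth_ex X HX nil DX t r 0 Hr).
    - change (Derive (fun y => X t y 0) r) with (p_x X t r 0).
      rewrite (Xx_eq t r Hr). field. lra. }
  rewrite ln_1 in E. unfold del. 
  replace (X t x 0) with (x * ((X t x 0 / x - /2*tau1 T t*ln x) + /2*tau1 T t * ln x)) by (field; lra).
  rewrite E. field.
Qed.

Lemma XD1 t x u : 0 < x -> p_x X t x u = /2 * tau1 T t * (ln x + 1) + del X t.
Proof.
  intros Hx. rewrite (ext_px X (fun t x u => x * (/2 * tau1 T t * ln x + del X t)) S6 t x u Hx).
  simpl. apply is_derive_unique. auto_derive; [lra| field; lra].
Qed.

Lemma XD2 t x u : 0 < x -> p_x (p_x X) t x u = tau1 T t / (2 * x).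
Proof.
  intros Hx. rewrite (ext_px (p_x X) (fun t x u => /2 * tau1 T t * (ln x + 1) + del X t) XD1 t x u Hx).
  simpl. apply is_derive_unique. auto_derive; [lra| field; lra].
Qed.

Lemma XDt t x u : 0 < x -> p_t X t x u = x * (/2 * tau2 T t * ln x + del1 X t).
Proof.
  intros Hx. rewrite (ext_pt X (fun t x u => x * (/2 * tau1 T t * ln x + del X t)) S6 t x u Hx).
  simpl. apply is_derive_unique. auto_derive.
  - split; [exact (smooth_ex T HT (Dt :: nil) Dt t 1 0 Rlt_0_1)|].
    split; [exact (smooth_ex X HX nil Dt t 1 0 Rlt_0_1)| trivial].
  - change (Derive (fun x0 => tau1 T x0) t) with (tau2 T t).
    change (Derive (fun x0 => del X x0) t) with (del1 X t). ring.
Qed.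

Lemma F1 t x u : 0 < x -> p_u F t x u = p_u F t x 0.
Proof.
  intros Hx. apply const_u.
  - intros r. apply (smooth_ex F HF (Du :: nil) Du t x r Hx).
  - intros r. apply (S3 t x r Hx).
Qed.

Lemma F2 t x u : 0 < x -> F t x u = F t x 0 + u * p_u F t x 0.
Proof.
  intros Hx.
  assert (E : F t x u - u * p_u F t x 0 = F t x 0 - 0 * p_u F t x 0).
  { apply (const_on (fun r => F t x r - r * p_u F t x 0) (Rmin u 0 - 1)).
    - intros r _. auto_derive.
      + exact (smooth_ex F HF nil Du t x r Hx).
      + change (Derive (fun y => F t x y) r) with (p_u F t x r). rewrite (F1 t x r Hx). ring.
    - pose proof (Rmin_l u 0); lra.
    - pose proof (Rmin_r u 0); lra. }
  lra.
Qed.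

Lemma Fxu_eq t x : 0 < x -> p_x (p_u F) t x 0 = B0x s k T X t x.
Proof.
  intros Hx. destruct (S3 t x 0 Hx) as [_ [_ [d3 _]]].
  rewrite (S6 t x 0 Hx), (XD1 t x 0 Hx), (XD2 t x 0 Hx), (XDt t x 0 Hx), (S5 t x 0 Hx) in d3.
  apply Rminus_diag_uniq. apply (mult_solve (s^2 * x^2)).
  { assert (0 < s^2 * x^2) by (apply Rmult_lt_0_compat; apply pow_lt; lra). lra. }
  etransitivity; [|exact d3]. unfold B0x, tau1. field. lra.
Qed.

Lemma F3 t x : 0 < x -> p_u F t x 0 = B0 s k T X t x + gam s k X F t.
Proof.
  intros Hx.
  assert (E : p_u F t x 0 - B0 s k T X t x = p_u F t 1 0 - B0 s k T X t 1).
  { apply (const_on (fun r => p_u F t r 0 - B0 s k T X t r) 0); try lra.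
    intros r Hr. unfold B0. auto_derive.
    - repeat split; try lra. apply (smooth_ex F HF (Du :: nil) DX t r 0 Hr).
    - change (Derive (fun y => p_u F t y 0) r) with (p_x (p_u F) t r 0).
      rewrite (Fxu_eq t r Hr). unfold B0x. field. lra. }
  unfold gam. unfold B0 at 2 in E. rewrite ln_1 in E. lra.
Qed.

Lemma F4 t x u : 0 < x -> F t x u = u * (B0 s k T X t x + gam s k X F t) + F t x 0.
Proof. intros Hx. rewrite (F2 t x u Hx), (F3 t x Hx). ring. Qed.

Lemma FDx t x u : 0 < x -> p_x F t x u = u * B0x s k T X t x + p_x F t x 0.
Proof.
  intros Hx. rewrite (ext_px F (fun t x u => u * (B0 s k T X t x + gam s k X F t) + F t x 0) F4 t x u Hx).
  change (Derive (fun r => u * (B0 s k T X t r + gam s k X F t) + F t r 0) x = u * B0x s k T X t x + p_x F t x 0).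
  apply is_derive_unique. unfold B0. auto_derive.
  - repeat split; try lra. exact (smooth_ex F HF nil DX t x 0 Hx).
  - change (Derive (fun y => F t y 0) x) with (p_x F t x 0). unfold B0x. field. lra.
Qed.

Lemma FDxx t x u : 0 < x -> p_x (p_x F) t x u = u * B0xx s k T X t x + p_x (p_x F) t x 0.
Proof.
  intros Hx. rewrite (ext_px (p_x F) (fun t x u => u * B0x s k T X t x + p_x F t x 0) FDx t x u Hx).
  change (Derive (fun r => u * B0x s k T X t r + p_x F t r 0) x = u * B0xx s k T X t x + p_x (p_x F) t x 0).
  apply is_derive_unique. unfold B0x. auto_derive.
  - repeat split; try lra; try nz. exact (smooth_ex F HF (DX :: nil) DX t x 0 Hx).
  - change (Derive (fun y => p_x F t y 0) x) with (p_x (p_x F) t x 0). unfold B0xx. field. lra.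
Qed.

Lemma ex_gam t : ex_derive (fun r => gam s k X F r) t.
Proof.
  unfold gam. auto_derive. split; [exact (smooth_ex F HF (Du :: nil) Dt t 1 0 Rlt_0_1)|].
  split; [exact (smooth_ex X HX nil Dt t 1 0 Rlt_0_1)| trivial].
Qed.

Lemma FDt t x u : 0 < x -> p_t F t x u =
  u * (B0t s k T X t x + Derive (fun r => gam s k X F r) t) + p_t F t x 0.
Proof.
  intros Hx. rewrite (ext_pt F (fun t x u => u * (B0 s k T X t x + gam s k X F t) + F t x 0) F4 t x u Hx).
  change (Derive (fun r => u * (B0 s k T X r x + gam s k X F r) + F r x 0) t =
    u * (B0t s k T X t x + Derive (fun r => gam s k X F r) t) + p_t F t x 0).
  apply is_derive_unique. unfold B0. auto_derive.
  - repeat split; try lra;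
    first [exact (smooth_ex T HT (Dt::nil) Dt t 1 0 Rlt_0_1) | exact (smooth_ex T HT (Dt::Dt::nil) Dt t 1 0 Rlt_0_1)
      | exact (smooth_ex X HX nil Dt t 1 0 Rlt_0_1) | exact (smooth_ex X HX (Dt::nil) Dt t 1 0 Rlt_0_1)
      | exact (smooth_ex F HF nil Dt t x 0 Hx) | apply ex_gam ].
  - change (Derive (fun y => F y x 0) t) with (p_t F t x 0).
    change (Derive (fun y => tau1 T y) t) with (tau2 T t).
    change (Derive (fun y => tau2 T y) t) with (tau3 T t).
    change (Derive (fun y => del X y) t) with (del1 X t).
    change (Derive (fun y => del1 X y) t) with (del2 X t).
    unfold B0t. field. lra.
Qed.

Lemma beta_eq t x : 0 < x ->
  tau3 T t * (ln x)^2/(4*s^2) + del2 X t * ln x / s^2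
  + (-s^2*tau1 T t/8 - tau2 T t/4 + del1 X t/2 - Derive (fun r => gam s k X F r) t) = 0.
Proof.
  intros Hx. destruct (S3 t x 1 Hx) as [_ [_ [_ E1]]]. destruct (S3 t x 0 Hx) as [_ [_ [_ E0]]].
  rewrite (FDx t x 1 Hx), (FDxx t x 1 Hx), (FDt t x 1 Hx), (F1 t x 1 Hx), (F3 t x Hx),
    (S6 t x 1 Hx), (S5 t x 1 Hx), (F4 t x 1 Hx) in E1.
  rewrite (S6 t x 0 Hx), (F3 t x Hx), (S5 t x 0 Hx) in E0.
  apply (comb _ _ _ 1 E1 E0); [lra|].
  unfold B0, B0x, B0xx, B0t, l, tau1. field. lra.
Qed.

Lemma psi_eq t x : 0 < x -> p_t F t x 0 =
  / 2 * s ^ 2 * x ^ 2 * p_x (p_x F) t x 0 + k * x * (0 - x) * p_x F t x 0 + l * x ^ 2 * F t x 0.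
Proof.
  intros Hx. destruct (S3 t x 0 Hx) as [_ [_ [_ E0]]].
  apply Rminus_diag_uniq. apply (comb _ 0 _ (-1) E0 eq_refl); [lra|]. ring.
Qed.

Lemma coefs t : tau3 T t = 0 /\ del2 X t = 0 /\ Derive (fun r => gam s k X F r) t = -s^2*tau1 T t/8 - tau2 T t/4 + del1 X t/2.
Proof.
  pose proof (beta_eq t 1 Rlt_0_1) as e0. pose proof (beta_eq t (exp 1) (exp_pos 1)) as e1.
  pose proof (beta_eq t (exp (-1)) (exp_pos (-1))) as e2.
  rewrite ln_1 in e0. rewrite ln_exp in e1, e2.
  assert (s2 : 0 < s^2) by (apply pow_lt; lra).
  set (g := Derive (fun r => gam s k X F r) t) in *.
  assert (c0 : -s^2*tau1 T t/8 - tau2 T t/4 + del1 X t/2 - g = 0).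
  { rewrite <- e0. field. lra. }
  rewrite c0 in e1, e2.
  assert (h1 : tau3 T t = 0).
  { apply (comb_p _ _ _ (/(2*s^2)) e1 e2); [nz|]. field. lra. }
  split; auto. split; [|lra].
  apply (comb _ _ _ (2/s^2) e1 e2); [apply Rgt_not_eq; unfold Rdiv; pos|]. field. lra.
Qed.

Lemma tau2_c t : tau2 T t = tau2 T 0 + 0 - 0.
Proof.
  apply (ode (fun r => tau2 T r) (fun _ => 0)).
  - intros r. exact (smooth_ex T HT (Dt::Dt::nil) Dt r 1 0 Rlt_0_1).
  - intros r. change (Derive (fun r => tau2 T r) r) with (tau3 T r). rewrite (proj1 (coefs r)).
    auto_derive; [trivial| ring].
Qed.

Lemma tau1_c t : tau1 T t = tau1 T 0 + tau2 T 0 * t.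
Proof.
  assert (E := ode (fun r => tau1 T r) (fun r => tau2 T 0 * r)).
  cbv beta in E. rewrite E; [ring| |].
  - intros r. exact (smooth_ex T HT (Dt::nil) Dt r 1 0 Rlt_0_1).
  - intros r. change (Derive (fun r => tau1 T r) r) with (tau2 T r). rewrite (tau2_c r).
    auto_derive; [trivial| ring].
Qed.

Lemma tau_c t : T t 1 0 = T 0 1 0 + tau1 T 0 * t + tau2 T 0 * t ^ 2 / 2.
Proof.
  assert (E := ode (fun r => T r 1 0) (fun r => tau1 T 0 * r + tau2 T 0 * r ^ 2 / 2)).
  cbv beta in E. rewrite E; [field| |].
  - intros r. exact (smooth_ex T HT nil Dt r 1 0 Rlt_0_1).
  - intros r. change (Derive (fun r => T r 1 0) r) with (tau1 T r). rewrite (tau1_c r).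
    auto_derive; (exact I || field).
Qed.

Lemma del1_c t : del1 X t = del1 X 0 + 0 - 0.
Proof.
  apply (ode (fun r => del1 X r) (fun _ => 0)).
  - intros r. exact (smooth_ex X HX (Dt::nil) Dt r 1 0 Rlt_0_1).
  - intros r. change (Derive (fun r => del1 X r) r) with (del2 X r). rewrite (proj1 (proj2 (coefs r))).
    auto_derive; [trivial| ring].
Qed.

Lemma del_c t : del X t = del X 0 + del1 X 0 * t.
Proof.
  assert (E := ode (fun r => del X r) (fun r => del1 X 0 * r)).
  cbv beta in E. rewrite E; [ring| |].
  - intros r. exact (smooth_ex X HX nil Dt r 1 0 Rlt_0_1).
  - intros r. change (Derive (fun r => del X r) r) with (del1 X r). rewrite (del1_c r).
    auto_derive; [trivial| ring].
Qed.

Lemma gam_c t : gam s k X F t = gam s k X F 0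
  + (-s^2*tau1 T 0/8 - tau2 T 0/4 + del1 X 0/2) * t - s^2 * tau2 T 0 * t^2/16.
Proof.
  assert (H2 : forall r, is_derive (fun r => (-s^2*tau1 T 0/8 - tau2 T 0/4 + del1 X 0/2) * r - s^2 * tau2 T 0 * r^2/16) r (Derive (fun r => gam s k X F r) r)).
  { intros r. rewrite (proj2 (proj2 (coefs r))). rewrite (tau1_c r), (tau2_c r), (del1_c r).
    auto_derive; (exact I || field). }
  assert (E := ode (fun r => gam s k X F r) _ ex_gam H2 t).
  cbv beta in E. rewrite E. field.
Qed.

Lemma fwd_main : exists (c : nat -> R) (psi : R -> R -> R),
     is_solution s k 0 l psi /\
     forall t x u : R, 0 < x ->
       T t x u = c 1%nat * tauV 1 t x u + c 2%nat * tauV 2 t x u + c 3%nat * tauV 3 t x u + c 4%nat * tauV 4 t x u + c 5%nat * tauV 5 t x u + c 6%nat * tauV 6 t x u /\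
       X t x u = c 1%nat * xiV 1 t x u + c 2%nat * xiV 2 t x u + c 3%nat * xiV 3 t x u + c 4%nat * xiV 4 t x u + c 5%nat * xiV 5 t x u + c 6%nat * xiV 6 t x u /\
       F t x u = c 1%nat * phiV s k 1 t x u + c 2%nat * phiV s k 2 t x u + c 3%nat * phiV s k 3 t x u + c 4%nat * phiV s k 4 t x u + c 5%nat * phiV s k 5 t x u + c 6%nat * phiV s k 6 t x u + psi t x.
Proof.
  exists (fun n => match n with
    | 1%nat => T 0 1 0 | 2%nat => tau1 T 0 | 3%nat => tau2 T 0 / 2
    | 4%nat => del X 0 | 5%nat => del1 X 0 | 6%nat => gam s k X F 0 | _ => 0 end).
  exists (fun t x => F t x 0). split.
  - split; [apply smooth_slice; exact HF|].
    intros t x Hx. exact (psi_eq t x Hx).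
  - intros t x u Hx. simpl. split; [|split].
    + rewrite (S4 t x u Hx), (tau_c t). field.
    + rewrite (S6 t x u Hx), (tau1_c t), (del_c t). field.
    + rewrite (F4 t x u Hx). unfold B0. rewrite (tau1_c t), (tau2_c t), (del_c t), (del1_c t), (gam_c t).
      field. lra.
Qed.

End Fwd.


Section Bwd.
Variables (s k : R) (Hs : 0 < s).
Let l := k ^ 2 / (2 * s ^ 2).
Variables (c1 c2 c3 c4 c5 c6 : R) (psi : R -> R -> R).
Hypothesis Hpsi : is_solution s k 0 l psi.
Variables (T X F : R -> R -> R -> R).

Definition Bf t x := c2*(k/(2*s^2)*x*ln x + /4*ln x - s^2/8*t)
  + c3*(k/s^2*t*x*ln x - /(2*s^2)*(ln x)^2 + /2*t*ln x - s^2/8*t^2 - /2*t)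
  + c4*(k/s^2*x) + c5*(k/s^2*t*x - /s^2*ln x + /2*t) + c6.
Definition Bfx t x := c2*(k/(2*s^2)*(ln x + 1) + /(4*x))
  + c3*(k/s^2*t*(ln x + 1) - ln x/(s^2*x) + t/(2*x)) + c4*(k/s^2) + c5*(k*t/s^2 - /(s^2*x)).
Definition Bfxx t x := c2*(k/(2*s^2*x) - /(4*x^2))
  + c3*(k*t/(s^2*x) - (1 - ln x)/(s^2*x^2) - t/(2*x^2)) + c5*(/(s^2*x^2)).
Definition Bft t x := c2*(-s^2/8) + c3*(k/s^2*x*ln x + ln x/2 - s^2*t/4 - /2) + c5*(k*x/s^2 + /2).

Hypothesis HT : forall t x u, 0 < x -> T t x u = c1 + c2*t + c3*t^2.
Hypothesis HX : forall t x u, 0 < x -> X t x u = c2*(/2*x*ln x) + c3*(t*x*ln x) + c4*x + c5*(t*x).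
Hypothesis HF : forall t x u, 0 < x -> F t x u = u * Bf t x + psi t x.

Let G := fun (t x _ : R) => psi t x.
Lemma psi_ex_x t x : 0 < x -> ex_derive (fun r => psi t r) x.
Proof. intros Hx. exact (smooth_ex G (proj1 Hpsi) nil DX t x 0 Hx). Qed.
Lemma psi_ex_xx t x : 0 < x -> ex_derive (fun r => Derive (fun y => psi t y) r) x.
Proof. intros Hx. exact (smooth_ex G (proj1 Hpsi) (DX :: nil) DX t x 0 Hx). Qed.
Lemma psi_ex_t t x : 0 < x -> ex_derive (fun r => psi r x) t.
Proof. intros Hx. exact (smooth_ex G (proj1 Hpsi) nil Dt t x 0 Hx). Qed.


Lemma bT_t t x u (Hx : 0 < x) : p_t T t x u = c2 + 2 * c3 * t.
Proof. rewrite (ext_pt T _ HT t x u Hx). apply is_derive_unique. auto_derive; (exact I || ring). Qed.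
Lemma bT_x t x u (Hx : 0 < x) : p_x T t x u = 0.
Proof. rewrite (ext_px T _ HT t x u Hx). apply is_derive_unique. auto_derive; (exact I || ring). Qed.
Lemma bT_u t x u (Hx : 0 < x) : p_u T t x u = 0.
Proof. rewrite (ext_pu T _ HT t x u Hx). apply is_derive_unique. auto_derive; (exact I || ring). Qed.


Lemma bT_xx t x u (Hx : 0 < x) : p_x (p_x T) t x u = 0.
Proof. exact (pd_zero_on (p_x T) bT_x DX t x u Hx). Qed.
Lemma bT_xu t x u (Hx : 0 < x) : p_x (p_u T) t x u = 0.
Proof. exact (pd_zero_on (p_u T) bT_u DX t x u Hx). Qed.
Lemma bT_uu t x u (Hx : 0 < x) : p_u (p_u T) t x u = 0.
Proof. exact (pd_zero_on (p_u T) bT_u Du t x u Hx). Qed.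

Lemma bX_t t x u (Hx : 0 < x) : p_t X t x u = c3*(x*ln x) + c5*x.
Proof. rewrite (ext_pt X _ HX t x u Hx). apply is_derive_unique. auto_derive; (exact I || ring). Qed.
Lemma bX_x t x u (Hx : 0 < x) : p_x X t x u = c2/2*(ln x + 1) + c3*t*(ln x + 1) + c4 + c5*t.
Proof. rewrite (ext_px X _ HX t x u Hx). apply is_derive_unique. auto_derive; [lra| field; lra]. Qed.
Lemma bX_u t x u (Hx : 0 < x) : p_u X t x u = 0.
Proof. rewrite (ext_pu X _ HX t x u Hx). apply is_derive_unique. auto_derive; (exact I || ring). Qed.
Lemma bX_xx t x u (Hx : 0 < x) : p_x (p_x X) t x u = c2/(2*x) + c3*t/x.
Proof. rewrite (ext_px (p_x X) _ bX_x t x u Hx). apply is_derive_unique. auto_derive; [lra| field; lra]. Qed.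
Lemma bX_xu t x u (Hx : 0 < x) : p_x (p_u X) t x u = 0.
Proof. exact (pd_zero_on (p_u X) bX_u DX t x u Hx). Qed.
Lemma bX_uu t x u (Hx : 0 < x) : p_u (p_u X) t x u = 0.
Proof. exact (pd_zero_on (p_u X) bX_u Du t x u Hx). Qed.

Lemma bF_u t x u (Hx : 0 < x) : p_u F t x u = Bf t x.
Proof. rewrite (ext_pu F _ HF t x u Hx). apply is_derive_unique. auto_derive; (exact I || ring). Qed.
Lemma bF_uu t x u (Hx : 0 < x) : p_u (p_u F) t x u = 0.
Proof. rewrite (ext_pu (p_u F) _ bF_u t x u Hx). apply is_derive_unique. auto_derive; (exact I || ring). Qed.
Lemma bF_xu t x u (Hx : 0 < x) : p_x (p_u F) t x u = Bfx t x.
Proof.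
  rewrite (ext_px (p_u F) _ bF_u t x u Hx). apply is_derive_unique. unfold Bf. auto_derive.
  - repeat split; lra.
  - unfold Bfx. field. lra.
Qed.
Lemma bF_x t x u (Hx : 0 < x) : p_x F t x u = u * Bfx t x + Derive (fun r => psi t r) x.
Proof.
  rewrite (ext_px F _ HF t x u Hx). apply is_derive_unique. unfold Bf. auto_derive.
  - repeat split; try lra. apply psi_ex_x; auto.
  - unfold Bfx. field. lra.
Qed.
Lemma bF_xx t x u (Hx : 0 < x) : p_x (p_x F) t x u = u * Bfxx t x + Derive (fun r => Derive (fun y => psi t y) r) x.
Proof.
  rewrite (ext_px (p_x F) _ bF_x t x u Hx). apply is_derive_unique. unfold Bfx. auto_derive.
  - repeat split; try lra; try nz. apply psi_ex_xx; auto.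
  - unfold Bfxx. field. lra.
Qed.
Lemma bF_t t x u (Hx : 0 < x) : p_t F t x u = u * Bft t x + Derive (fun r => psi r x) t.
Proof.
  rewrite (ext_pt F _ HF t x u Hx). apply is_derive_unique. unfold Bf. auto_derive.
  - repeat split; try lra. apply psi_ex_t; auto.
  - unfold Bft. field. lra.
Qed.

Lemma bwd_main : is_symmetry s k 0 l T X F.
Proof.
  intros t x u ut ux uxx uxt Hx HD.
  assert (Hut : ut = UT s k l x u ux uxx).
  { symmetry. apply Rminus_diag_uniq. exact HD. }
  rewrite Hut, pr2_eq.
  rewrite (bT_t t x u Hx), (bT_x t x u Hx), (bT_u t x u Hx), (bT_xx t x u Hx), (bT_xu t x u Hx), (bT_uu t x u Hx).
  rewrite (HX t x u Hx), (bX_t t x u Hx), (bX_x t x u Hx), (bX_u t x u Hx), (bX_xx t x u Hx), (bX_xu t x u Hx), (bX_uu t x u Hx).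
  rewrite (HF t x u Hx), (bF_t t x u Hx), (bF_x t x u Hx), (bF_u t x u Hx), (bF_xx t x u Hx), (bF_xu t x u Hx), (bF_uu t x u Hx).
  apply alg_conv; try reflexivity.
  - field.
  - unfold Bfx. field. lra.
  - rewrite (proj2 Hpsi t x Hx). unfold Bf, Bfx, Bfxx, Bft, l. field. lra.
Qed.

End Bwd.


Theorem proposition2p1 (sigma k alpha lambda : R)
    (Hsigma : 0 < sigma) (Hk : 0 < k) (Halpha : 0 <= alpha)
    (Halpha0 : alpha = 0) (Hlambda : lambda = k ^ 2 / (2 * sigma ^ 2))
    (tau xi phi : R -> R -> R -> R) :
  smooth_on tau -> smooth_on xi -> smooth_on phi ->
  (is_symmetry sigma k alpha lambda tau xi phi <->
   exists (c : nat -> R) (psi : R -> R -> R),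
     is_solution sigma k alpha lambda psi /\
     forall t x u : R, 0 < x ->
       tau t x u = c 1%nat * tauV 1 t x u + c 2%nat * tauV 2 t x u + c 3%nat * tauV 3 t x u + c 4%nat * tauV 4 t x u + c 5%nat * tauV 5 t x u + c 6%nat * tauV 6 t x u /\
       xi t x u = c 1%nat * xiV 1 t x u + c 2%nat * xiV 2 t x u + c 3%nat * xiV 3 t x u + c 4%nat * xiV 4 t x u + c 5%nat * xiV 5 t x u + c 6%nat * xiV 6 t x u /\
       phi t x u = c 1%nat * phiV sigma k 1 t x u + c 2%nat * phiV sigma k 2 t x u + c 3%nat * phiV sigma k 3 t x u + c 4%nat * phiV sigma k 4 t x u + c 5%nat * phiV sigma k 5 t x u + c 6%nat * phiV sigma k 6 t x u + psi t x).
Proof.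
  intros HT HX HF. subst alpha lambda. split.
  - intros Hsym. apply (fwd_main sigma k Hsigma tau xi phi HT HX HF).
    intros t x u Hx ux uxx uxt. rewrite <- pr2_eq. apply Hsym; auto.
    unfold Defs.Delta, UT. ring.
  - intros [c [psi [Hpsi H]]].
    apply (bwd_main sigma k Hsigma (c 1%nat) (c 2%nat) (c 3%nat) (c 4%nat) (c 5%nat) (c 6%nat) psi Hpsi);
      intros t x u Hx; destruct (H t x u Hx) as [h1 [h2 h3]].
    + rewrite h1. simpl. ring.
    + rewrite h2. simpl. ring.
    + rewrite h3. unfold Bf. simpl. ring.
Qed.
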